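(* Let $G$ be a word hyperbolic group and $0\to\mathbb Z\xrightarrow{\iota}E\xrightarrow{\pi}G\to1$ a central extension, $X$ a finite set mapping onto a symmetric generating set of $E$ (evaluation $w\mapsto\overline w\in E$). Let $C>0$ be an integer such that for every $g\in G$ the maximum $\max\{\overline w\,\iota(-C\,\mathrm{len}(w)): w\in X^*,\ \pi(\overline w)=g\}$ exists in the ordered fibre $\pi^{-1}(g)$, and define $\rho:G\to E$ by letting $\rho(g)$ be this maximum. Then for all $g\in G$ and $x\in X$: (1) $|\rho(g)\overline x-\rho(g\pi(\overline x))|\le C$; (2) $|\overline x\rho(g)-\rho(\pi(\overline x)g)|\le C$.
   Context: The order on a fibre $\pi^{-1}(g)$: $h_1\le h_2$ iff $h_2h_1^{-1}=\iota(n)$ with $n\ge0$. For $h_1,h_2$ in the same fibre, $h_1-h_2$ denotes the integer $n$ with $\iota(n)=h_1h_2^{-1}$. *)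

(* Defs.v *)
(* Abstract (possibly infinite) groups are given as a record
   with their operations and axioms, since MathComp only has finite groups. *)
From Stdlib Require List.
From mathcomp Require Import all_boot all_order all_algebra.
Set Implicit Arguments. Unset Strict Implicit. Unset Printing Implicit Defensive.
Import Order.TTheory GRing.Theory Num.Theory.
Local Open Scope ring_scope.

Record AGroup := MkGroup {
  gcar :> Type;
  gmul : gcar -> gcar -> gcar;
  gone : gcar;
  ginv : gcar -> gcar;
  gmulA : forall a b c, gmul a (gmul b c) = gmul (gmul a b) c;
  gmul1l : forall a, gmul gone a = a;
  gmul1r : forall a, gmul a gone = a;
  gmulVl : forall a, gmul (ginv a) a = gone;
  gmulVr : forall a, gmul a (ginv a) = gone
}.

Arguments gmul {a0}. Arguments gone {a0}. Arguments ginv {a0}.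

Definition weval (G : AGroup) (A : Type) (ev : A -> G) (w : seq A) : G :=
  foldr (fun a acc => gmul (ev a) acc) gone w.

Definition word_over (G : AGroup) (S : seq G) (w : seq G) : Prop :=
  List.Forall (fun s => List.In s S) w.

Definition fin_sym_gen_set (G : AGroup) (S : seq G) : Prop :=
  (forall s, List.In s S -> List.In (ginv s) S) /\
  (forall g : G, exists w, word_over S w /\ weval id w = g).

Definition word_dist (G : AGroup) (S : seq G) (a b : G) (n : nat) : Prop :=
  (exists w, word_over S w /\ weval id w = gmul (ginv a) b /\ size w = n) /\
  (forall w, word_over S w -> weval id w = gmul (ginv a) b -> (n <= size w)%N).

(* Gromov hyperbolicity of the word metric (four-point condition on the
   vertices of the Cayley graph, with doubled Gromov products
   2(x|y)_p = d(x,p) + d(y,p) - d(x,y)):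
   (x|z)_p >= min((x|y)_p, (y|z)_p) - delta. *)
Definition delta_hyperbolic (G : AGroup) (S : seq G) (delta : nat) : Prop :=
  forall (x y z p : G) (dxp dyp dzp dxy dyz dxz : nat),
    word_dist S x p dxp -> word_dist S y p dyp -> word_dist S z p dzp ->
    word_dist S x y dxy -> word_dist S y z dyz -> word_dist S x z dxz ->
    Num.min (dxp%:Z + dyp%:Z - dxy%:Z) (dyp%:Z + dzp%:Z - dyz%:Z)
      - 2 * delta%:Z <= dxp%:Z + dzp%:Z - dxz%:Z.

Definition word_hyperbolic (G : AGroup) : Prop :=
  exists (S : seq G) (delta : nat), fin_sym_gen_set S /\ delta_hyperbolic S delta.

Definition central_extension (E G : AGroup) (iota : int -> E) (pi : E -> G) : Prop :=
  (forall m n : int, iota (m + n) = gmul (iota m) (iota n)) /\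
  injective iota /\
  (forall (n : int) (e : E), gmul (iota n) e = gmul e (iota n)) /\
  (forall a b : E, pi (gmul a b) = gmul (pi a) (pi b)) /\
  (forall g : G, exists e, pi e = g) /\
  (forall e : E, pi e = gone <-> exists n, iota n = e).

Definition fib_le (E : AGroup) (iota : int -> E) (h1 h2 : E) : Prop :=
  exists n : int, 0 <= n /\ iota n = gmul h2 (ginv h1).

(* |h1 - h2| <= C, where h1 - h2 is the integer n with iota n = h1 h2^-1. *)
Definition fib_dist_le (E : AGroup) (iota : int -> E) (h1 h2 : E) (C : int) : Prop :=
  exists n : int, iota n = gmul h1 (ginv h2) /\ `|n| <= C.

Definition cand (E G : AGroup) (iota : int -> E) (pi : E -> G) (X : finType)
    (ev : X -> E) (C : int) (g : G) (h : E) : Prop :=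
  exists w : seq X, pi (weval ev w) = g /\
    h = gmul (weval ev w) (iota (- (C * (size w)%:Z))).

Definition is_cand_max (E G : AGroup) (iota : int -> E) (pi : E -> G) (X : finType)
    (ev : X -> E) (C : int) (g : G) (h : E) : Prop :=
  cand iota pi ev C g h /\ (forall h', cand iota pi ev C g h' -> fib_le iota h' h).

(* Main.v *)
Require Import Defs.
From mathcomp Require Import all_boot all_order all_algebra zify.
Import Order.TTheory GRing.Theory Num.Theory.
Local Open Scope ring_scope.
Set Implicit Arguments. Unset Strict Implicit.

Lemma gcancl (G : AGroup) (a b c : G) : gmul a b = gmul a c -> b = c.
Proof.
move=> H; have := f_equal (gmul (ginv a)) H.
by rewrite !gmulA gmulVl !gmul1l.
Qed.

Lemma ginv_uniq (G : AGroup) (a b : G) : gmul a b = gone -> ginv a = b.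
Proof. move=> H; apply: (@gcancl G a); by rewrite gmulVr H. Qed.

Lemma ginvM (G : AGroup) (a b : G) : ginv (gmul a b) = gmul (ginv b) (ginv a).
Proof.
apply: ginv_uniq; by rewrite gmulA -(gmulA a) gmulVr gmul1r gmulVr.
Qed.

Lemma ginvK (G : AGroup) (a : G) : ginv (ginv a) = a.
Proof. by apply: ginv_uniq; rewrite gmulVl. Qed.

Lemma iota0 (E G : AGroup) (iota : int -> E) (pi : E -> G) :
  central_extension iota pi -> iota 0 = gone.
Proof.
case=> Hadd _. apply: (@gcancl E (iota 0)). by rewrite -Hadd addr0 gmul1r.
Qed.

Lemma iotaN (E G : AGroup) (iota : int -> E) (pi : E -> G) :
  central_extension iota pi -> forall z, ginv (iota z) = iota (- z).
Proof.
move=> Hc z; apply: ginv_uniq; case: (Hc) => Hadd _.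
by rewrite -Hadd subrr (iota0 Hc).
Qed.

Lemma pi1 (E G : AGroup) (iota : int -> E) (pi : E -> G) :
  central_extension iota pi -> pi gone = gone.
Proof.
case=> _ [_ [_ [Hpi _]]]. apply: (@gcancl G (pi gone)).
by rewrite -Hpi !gmul1r.
Qed.

Lemma weval_rcons (E : AGroup) (X : Type) (ev : X -> E) w x :
  weval ev (rcons w x) = gmul (weval ev w) (ev x).
Proof.
elim: w => [|a w IH] /=; first by rewrite gmul1l gmul1r.
by rewrite IH gmulA.
Qed.

Lemma core (E G : AGroup) (iota : int -> E) (pi : E -> G) (C : int) (a b c h : E) :
  central_extension iota pi ->
  fib_le iota (gmul a (iota (- C))) b ->
  fib_le iota (gmul c (iota (- C))) h ->
  (forall k, iota k = gmul a (ginv b) -> iota k = gmul h (ginv c)) ->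
  fib_dist_le iota a b C.
Proof.
move=> Hc [n [n0 Hn]] [m [m0 Hm]] Hk.
have Hc' := Hc; case: Hc' => Hadd [Hinj [Hcen _]].
have E1 : forall u v : E, gmul u (ginv (gmul v (iota (- C)))) = gmul (iota C) (gmul u (ginv v)).
  move=> u v; rewrite ginvM (iotaN Hc) opprK gmulA -Hcen -gmulA //.
rewrite E1 in Hn; rewrite E1 in Hm.
have Hab : iota (C - n) = gmul a (ginv b).
  have : gmul b (ginv a) = iota (n - C).
    by rewrite addrC Hadd Hn gmulA -Hadd addNr (iota0 Hc) gmul1l.
  move/(f_equal ginv); rewrite ginvM ginvK (iotaN Hc) => ->; congr iota; lia.
exists (C - n); split => //.
have Hk2 := Hk _ Hab; rewrite -Hk2 -Hadd in Hm; have Hm2 := Hinj _ _ Hm.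
rewrite ler_norml; apply/andP.
split; lia.
Qed.

Lemma iota_sz (E G : AGroup) (iota : int -> E) (pi : E -> G) (C : int) (k : nat) :
  central_extension iota pi ->
  iota (- (C * (k.+1)%:Z)) = gmul (iota (- (C * k%:Z))) (iota (- C)).
Proof. case=> Hadd _; rewrite -Hadd; congr iota; lia. Qed.

Theorem lemma2p3 (G E : AGroup) (iota : int -> E) (pi : E -> G)
  (X : finType) (ev : X -> E) (C : int) (rho : G -> E) :
  word_hyperbolic G ->
  central_extension iota pi ->
  (forall x : X, exists y : X, ev y = ginv (ev x)) ->
  (forall e : E, exists w : seq X, weval ev w = e) ->
  0 < C ->
  (forall g : G, is_cand_max iota pi ev C g (rho g)) ->
  forall (g : G) (x : X),
    fib_dist_le iota (gmul (rho g) (ev x)) (rho (gmul g (pi (ev x)))) C /\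
    fib_dist_le iota (gmul (ev x) (rho g)) (rho (gmul (pi (ev x)) g)) C.
Proof.
move=> _ Hc Hsym _ _ Hrho g x.
have Hc' := Hc; case: Hc' => Hadd [Hinj [Hcen [Hpi _]]].
case: (Hsym x) => y Hy.
have [[w [Hw Hh]] _] := Hrho g.
set h := rho g in Hh *.
have swap : forall (a z : E) n, gmul (gmul a (iota n)) z = gmul (gmul a z) (iota n).
  by move=> a z n; rewrite -gmulA Hcen gmulA.
split.
- set g' := gmul g (pi (ev x)).
  have [[v [Hv Hb]] Hmax'] := Hrho g'.
  set b := rho g' in Hb Hmax' *.
  apply: (core (c := gmul b (ginv (ev x))) (h := h) Hc).
  + apply: Hmax'; exists (rcons w x); split.
      by rewrite weval_rcons Hpi Hw.
    rewrite weval_rcons size_rcons (iota_sz _ _ Hc) Hh.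
    by rewrite swap gmulA.
  + apply: (proj2 (Hrho g)); exists (rcons v y); split.
      rewrite weval_rcons Hpi Hv Hy /g' -gmulA -Hpi gmulVr (pi1 Hc) gmul1r //.
    rewrite weval_rcons size_rcons (iota_sz _ _ Hc) Hb Hy.
    by rewrite swap gmulA.
  + move=> k ->; by rewrite ginvM ginvK !gmulA.
- set g' := gmul (pi (ev x)) g.
  have [[v [Hv Hb]] Hmax'] := Hrho g'.
  set b := rho g' in Hb Hmax' *.
  apply: (core (c := gmul (ginv (ev x)) b) (h := h) Hc).
  + apply: Hmax'; exists (x :: w); split.
      by rewrite /= Hpi Hw.
    by rewrite /= (iota_sz _ _ Hc) Hh !gmulA.
  + apply: (proj2 (Hrho g)); exists (y :: v); split.
      rewrite /= Hpi Hv Hy /g' gmulA -Hpi gmulVl (pi1 Hc) gmul1l //.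
    by rewrite /= (iota_sz _ _ Hc) Hb Hy !gmulA.
  + move=> k Hk; rewrite ginvM ginvK gmulA.
    have Hhb : gmul h (ginv b) = gmul (ginv (ev x)) (iota k).
      by rewrite Hk !gmulA gmulVl gmul1l.
    by rewrite Hhb -gmulA Hcen gmulA gmulVl gmul1l.
Qed.
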